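(* Fix integers $d\ge 2$ and $n$ with $d+2\leq n\leq 2d$. Every $n$-point softmax code $X$ in $S^{d-1}$ has no softmax rattler.
   Context: $[n]=\{1,\ldots,n\}$. For a configuration $X=\{x_i\}_{i\in[n]}$ in the unit sphere $S^{d-1}\subseteq\mathbb{R}^d$, $\delta(X):=\min_{j\in[n]}\operatorname{dist}(x_j,\operatorname{conv}\{x_i\}_{i\in[n]\setminus\{j\}})$. A softmax code is an $n$-point configuration in $S^{d-1}$ maximizing $\delta$. A softmax rattler of $X$ is an index $j\in[n]$ with $\operatorname{dist}(x_j,\operatorname{conv}\{x_i\}_{i\in[n]\setminus\{j\}})>\delta(X)$. *)

(* Defs.v *)
From HB Require Import structures.
From mathcomp Require Import all_boot all_order all_algebra.
From mathcomp Require Import classical_sets reals.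
Set Implicit Arguments. Unset Strict Implicit. Unset Printing Implicit Defensive.
Import Order.TTheory GRing.Theory Num.Theory.
Local Open Scope ring_scope.
Local Open Scope classical_set_scope.

Section Softmax.
Variable R : realType.

Definition enorm (d : nat) (v : 'rV[R]_d) : R :=
  Num.sqrt (\sum_(k < d) v ord0 k ^+ 2).

Definition on_sphere (d : nat) (v : 'rV[R]_d) : Prop := enorm v = 1.

Definition conv_others (d n : nat) (X : 'I_n -> 'rV[R]_d) (j : 'I_n)
  : set 'rV[R]_d :=
  [set y | exists w : 'I_n -> R,
     [/\ forall i, 0 <= w i,
         w j = 0,
         \sum_(i < n) w i = 1 &
         y = \sum_(i < n) w i *: X i]].

Definition dist_set (d : nat) (x : 'rV[R]_d) (C : set 'rV[R]_d) : R :=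
  inf [set enorm (x - y) | y in C].

Definition dist_j (d n : nat) (X : 'I_n -> 'rV[R]_d) (j : 'I_n) : R :=
  dist_set (X j) (conv_others X j).

Definition delta (d n : nat) (X : 'I_n -> 'rV[R]_d) : R :=
  inf [set dist_j X j | j in [set: 'I_n]].

Definition config_on_sphere (d n : nat) (X : 'I_n -> 'rV[R]_d) : Prop :=
  forall i, on_sphere (X i).

Definition softmax_code (d n : nat) (X : 'I_n -> 'rV[R]_d) : Prop :=
  config_on_sphere X /\
  forall Y : 'I_n -> 'rV[R]_d, config_on_sphere Y -> delta Y <= delta X.

Definition softmax_rattler (d n : nat) (X : 'I_n -> 'rV[R]_d) (j : 'I_n) : Prop :=
  dist_j X j > delta X.

End Softmax.

(* Main.v *)
Require Import Defs.
From HB Require Import structures.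
From mathcomp Require Import all_boot all_order all_algebra.
From mathcomp Require Import classical_sets reals.
From mathcomp Require Import zify ring lra.
Import Order.TTheory GRing.Theory Num.Theory.
Set Implicit Arguments. Unset Strict Implicit.
Local Open Scope ring_scope.

Section Aux.
Variable R : realType.

Definition sq (d : nat) (v : 'rV[R]_d) : R := \sum_(k < d) v ord0 k ^+ 2.

Lemma sq_ge0 d (v : 'rV[R]_d) : 0 <= sq v.
Proof. by apply: sumr_ge0 => k _; apply: sqr_ge0. Qed.

Lemma enorm_ge0 d (v : 'rV[R]_d) : 0 <= enorm v.
Proof. exact: sqrtr_ge0. Qed.

Lemma sphere_sq d (v : 'rV[R]_d) : on_sphere v -> sq v = 1.
Proof.
rewrite /on_sphere /enorm => H.
by rewrite -(sqr_sqrtr (sq_ge0 v)) /sq H expr1n.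
Qed.

Lemma enorm_ge1 d (v : 'rV[R]_d) : 1 <= enorm v -> 1 <= sq v.
Proof. by move=> h; rewrite -(ler_sqrt _ (sq_ge0 v)) sqrtr1. Qed.

Lemma ge1_enorm d (v : 'rV[R]_d) : 1 <= sq v -> 1 <= enorm v.
Proof. by move=> h; rewrite /enorm -sqrtr1 ler_sqrt //; apply: sq_ge0. Qed.

Lemma dist_le d n (X : 'I_n -> 'rV[R]_d) j y :
  conv_others X j y -> dist_j X j <= enorm (X j - y).
Proof.
move=> Hy.
have hb : has_lbound [set enorm (X j - y) | y in conv_others X j].
  by exists 0 => _ [y' _ <-]; apply: enorm_ge0.
by apply: (ge_inf hb); exists y.
Qed.

Lemma conv_ne d n (X : 'I_n -> 'rV[R]_d) j : (1 < n)%N ->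
  exists y, conv_others X j y.
Proof.
move=> n1.
pose k : 'I_n := if (val j == 0)%N then Ordinal n1 else Ordinal (ltnW n1).
have kj : k != j.
  by rewrite /k; case: (val j =P 0%N) => h; apply/eqP => E; move: h; rewrite -E.
exists (\sum_i (i == k)%:R *: X i), (fun i => (i == k)%:R); split => //.
- by rewrite eq_sym (negbTE kj).
- rewrite (bigD1 k) //= eqxx big1 ?addr0 // => i /negbTE ->; by [].
Qed.

Lemma le_dist d n (X : 'I_n -> 'rV[R]_d) j b : (1 < n)%N ->
  (forall y, conv_others X j y -> b <= enorm (X j - y)) -> b <= dist_j X j.
Proof.
move=> n1 H; apply: lb_le_inf.
  by have [y Hy] := conv_ne X j n1; exists (enorm (X j - y)), y.
by move=> _ [y Hy <-]; apply: H.
Qed.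

Lemma dist_ge0 d n (X : 'I_n -> 'rV[R]_d) j : (1 < n)%N -> 0 <= dist_j X j.
Proof. by move=> n1; apply: le_dist => // y _; apply: enorm_ge0. Qed.

Lemma delta_le d n (X : 'I_n -> 'rV[R]_d) i : (1 < n)%N -> delta X <= dist_j X i.
Proof.
move=> n1.
have hb : has_lbound [set dist_j X j | j in [set: 'I_n]].
  by exists 0 => _ [j _ <-]; apply: dist_ge0.
by apply: (ge_inf hb); exists i.
Qed.

Lemma le_delta d n (X : 'I_n -> 'rV[R]_d) b : (0 < n)%N ->
  (forall i, b <= dist_j X i) -> b <= delta X.
Proof.
move=> n0 H; apply: lb_le_inf.
  by exists (dist_j X (Ordinal n0)), (Ordinal n0).
by move=> _ [j _ <-]; apply: H.
Qed.


Lemma core d n (X : 'I_n -> 'rV[R]_d) (a : 'I_n -> R) :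
  (forall i, sq (X i) = 1) -> (forall i, 0 <= a i) -> \sum_i a i = 1 ->
  (forall i, 0 < a i -> 1 <= sq (X i - \sum_l a l *: X l)) ->
  \sum_l a l *: X l = 0.
Proof.
move=> Hs Ha Ha1 Hd.
set z := \sum_l a l *: X l in Hd *.
have zk k : z ord0 k = \sum_l a l * X l ord0 k.
  by rewrite /z summxE; apply: eq_bigr => l _; rewrite mxE.
have E : \sum_i a i * sq (X i - z) = 1 - sq z.
  transitivity (\sum_i \sum_k (a i * X i ord0 k ^+ 2 - 2 * z ord0 k * (a i * X i ord0 k)
      + z ord0 k ^+2 * a i)).
    by apply: eq_bigr => i _; rewrite /sq mulr_sumr; apply: eq_bigr => k _; rewrite !mxE; ring.
  rewrite exchange_big /=.
  transitivity (\sum_k (\sum_i a i * X i ord0 k ^+ 2) - sq z).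
    rewrite /sq -sumrB; apply: eq_bigr => k _.
    rewrite big_split sumrB /= -!mulr_sumr -zk Ha1; ring.
  congr (_ - _); rewrite exchange_big /= -Ha1; apply: eq_bigr => i _.
  by rewrite -mulr_sumr; have := Hs i; rewrite /sq => ->; rewrite mulr1.
have L : 1 <= \sum_i a i * sq (X i - z).
  rewrite -{1}Ha1; apply: ler_sum => i _.
  have := Ha i; rewrite le_eqVlt => /orP [/eqP <-|h]; first by rewrite mul0r.
  by rewrite -{1}(mulr1 (a i)) ler_wpM2l // Hd.
have sz0 : sq z = 0.
  apply/eqP; rewrite eq_le sq_ge0 andbT; move: L; rewrite E; lra.
apply/rowP => k; rewrite [RHS]mxE.
have h0 : z ord0 k ^+ 2 = 0.
  by apply: (psumr_eq0P _ sz0) => // l _; apply: sqr_ge0.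
by move/eqP: h0; rewrite sqrf_eq0 => /eqP.
Qed.


Lemma modd {d i : nat} : (i < 2 * d)%N -> (i %% d = if (i < d)%N then i else i - d)%N.
Proof.
move=> hi; case: ltnP => h; first by rewrite modn_small.
rewrite -{1}(subnK h) modnDr modn_small //; lia.
Qed.

Lemma natmod (d i j : nat) : (i < 2 * d)%N -> (j < 2 * d)%N -> i != j ->
  (i %% d = j %% d)%N -> (i < d)%N = ~~ (j < d)%N.
Proof. move=> hi hj hij; rewrite (modd hi) (modd hj).
case: (ltnP i d); case: (ltnP j d) => //= *; lia. Qed.

Lemma orthoplex d n : (0 < d)%N -> (1 < n)%N -> (n <= 2 * d)%N ->
  exists Y : 'I_n -> 'rV[R]_d, config_on_sphere Y /\ 1 <= delta Y.
Proof.
move=> d0 n1 n2.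
pose s (i : nat) : R := if (i < d)%N then 1 else -1.
have s2 i : s i * s i = 1 by rewrite /s; case: ifP => _; rewrite ?mulrNN mulr1.
pose Y (i : 'I_n) : 'rV[R]_d := \row_(k < d) (s i * ((val k == (i %% d)%N))%:R).
have Yk i k : Y i ord0 k = s i * ((val k == (i %% d)%N))%:R by rewrite mxE.
pose k0 (i : 'I_n) : 'I_d := Ordinal (ltn_pmod i d0).
have sqY i : sq (Y i) = 1.
  rewrite /sq (bigD1 (k0 i)) //= big1 ?addr0.
    by rewrite Yk eqxx mulr1 expr2 s2.
  move=> k hk; rewrite Yk; case: eqP => h; last by rewrite mulr0 expr2 mulr0.
  by exfalso; move: hk; apply/negP; rewrite negbK; apply/eqP/val_inj.
exists Y; split.
  by move=> i; rewrite /on_sphere /enorm; have := sqY i; rewrite /sq => ->; rewrite sqrtr1.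
apply: le_delta; first by lia.
move=> j; apply: le_dist => // y [w [w0 wj w1 ->]].
apply: ge1_enorm.
set k := k0 j.
have key : 1 <= s j * (Y j - \sum_i w i *: Y i) ord0 k.
  rewrite !mxE summxE /k /= eqxx mulr1 mulrBr s2 mulr_sumr.
  rewrite lerBDr gerDl; apply: sumr_le0 => i _; rewrite mxE.
  case: (i =P j) => [->|ne]; first by rewrite wj mul0r mulr0.
  have : val (k0 j) == (i %% d)%N = ((i %% d)%N == (j %% d)%N) by rewrite eq_sym.
  rewrite [Y i ord0 _]Yk /= => ->.
  case: eqP => hm; last by rewrite !mulr0.
  have hs : s i = - s j.
    have hi := ltn_ord i; have hj := ltn_ord j.
    have ij : (i : nat) != j by apply/eqP => /val_inj.
    have := natmod (d:=d) (i:=i) (j:=j) ltac:(lia) ltac:(lia) ij hm.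
    by rewrite /s => ->; case: (j < d)%N; rewrite /= ?opprK.
  rewrite hs mulr1 mulrN mulrN mulrCA oppr_le0; apply: mulr_ge0 => //; rewrite -expr2; exact: sqr_ge0.
rewrite /sq (bigD1 k) //=.
have r0 : 0 <= \sum_(i < d | i != k) (Y j - \sum_(i0 < n) w i0 *: Y i0) ord0 i ^+ 2.
  by apply: sumr_ge0 => i _; apply: sqr_ge0.
set t := (Y j - _) ord0 k in key *.
have -> : t ^+ 2 = (s j * t) ^+ 2.
  by rewrite exprMn [s j ^+ 2]expr2 s2 mul1r.
move: key r0; set u := s j * t; set v := \sum_(_ < _ | _) _.
by move=> *; nra.
Qed.


Lemma affdep d n (X : 'I_n -> 'rV[R]_d) : (d.+1 < n)%N ->
  exists c : 'I_n -> R, [/\ exists k, c k != 0, \sum_i c i = 0 &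
    forall m, \sum_i c i * X i ord0 m = 0].
Proof.
move=> hn.
pose M : 'M[R]_(n, d + 1) := row_mx (\matrix_(i, k) X i ord0 k) (const_mx 1).
pose K := kermx M.
have rK : (0 < \rank K)%N by rewrite mxrank_ker; have := rank_leq_col M; lia.
have hK0 : K != 0 by rewrite -mxrank_eq0 -lt0n.
have [i [k hk]] : exists i k, K i k != 0.
  have : ~~ [forall i, [forall k, K i k == 0]].
    apply: contra hK0 => /forallP h; apply/eqP/matrixP => i k; rewrite [RHS]mxE.
    by move/forallP: (h i) => /(_ k) /eqP.
  by move/forallPn => [i /forallPn [k hk]]; exists i, k.
have hv : row i K *m M = 0 by rewrite -row_mul mulmx_ker row0.
exists (fun l => K i l); split; first by exists k.
- have := congr1 (fun A : 'M[R]_(1, d + 1) => A ord0 (rshift d (ord0 : 'I_1))) hv; rewrite /= [LHS]mxE [RHS]mxE => h; rewrite -[RHS]h.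
  by apply: eq_bigr => l _; rewrite row_mxEr !mxE mulr1.
- move=> m; have := congr1 (fun A : 'M[R]_(1, d + 1) => A ord0 (lshift 1 m)) hv; rewrite /= [LHS]mxE [RHS]mxE => h; rewrite -[RHS]h.
  by apply: eq_bigr => l _; rewrite row_mxEl !mxE.
Qed.


Lemma fin d n (X : 'I_n -> 'rV[R]_d) (a b : 'I_n -> R) j :
  (forall i, sq (X i) = 1) ->
  (forall i y, conv_others X i y -> 1 <= sq (X i - y)) ->
  (forall i, 0 <= a i) -> (forall i, 0 <= b i) -> \sum_i a i = 1 -> \sum_i b i = 1 ->
  (forall i, 0 < a i -> b i = 0) ->
  \sum_i a i *: X i = \sum_i b i *: X i -> a j = 0 -> conv_others X j 0.
Proof.
move=> Hs Hd ha hb ha1 hb1 hab E aj.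
have z0 : \sum_i a i *: X i = 0.
  apply: core => // i ai; apply: Hd; rewrite E; exists b; split => //; exact: hab.
by exists a; split.
Qed.

End Aux.

Unset Implicit Arguments.
Set Strict Implicit.

Theorem lemma8 (R : realType) (d n : nat) :
  (2 <= d)%N -> (d + 2 <= n)%N -> (n <= 2 * d)%N ->
  forall X : 'I_n -> 'rV[R]_d, softmax_code X ->
  forall j : 'I_n, ~ softmax_rattler X j.
Proof.
move=> hd hdn hn2 X [HX Hmax] j.
have n1 : (1 < n)%N by lia.
have [Y [HY HY1]] := @orthoplex R d n ltac:(lia) n1 hn2.
have Hdel : 1 <= delta X := le_trans HY1 (Hmax Y HY).
have Hs i : sq (X i) = 1 := sphere_sq (HX i).
have Hd i y : conv_others X i y -> 1 <= sq (X i - y).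
  move=> hy; apply: enorm_ge1; apply: le_trans Hdel _.
  apply: le_trans (delta_le X i n1) _; exact: dist_le.
have [c [[k ck] sc sx]] := affdep X (ltac:(lia) : (d.+1 < n)%N).
pose cp i := if 0 < c i then c i else 0.
pose cn i := if c i < 0 then - c i else 0.
have cpn i : c i = cp i - cn i.
  rewrite /cp /cn; case: (ltrgtP 0 (c i)) => h; rewrite ?subr0 ?sub0r ?opprK //.
have cp0 i : 0 <= cp i by rewrite /cp; case: ifP => // /ltW.
have cn0 i : 0 <= cn i by rewrite /cn; case: ifP => // h; rewrite oppr_ge0 ltW.
have cpn0 i : 0 < cp i -> cn i = 0.
  by rewrite /cp /cn; case: (ltrgtP 0 (c i)) => h //; rewrite ltxx.
have cnp0 i : 0 < cn i -> cp i = 0.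
  by rewrite /cp /cn; case: (ltrgtP 0 (c i)) => h //; rewrite ?ltxx // oppr_gt0 => /lt_trans /(_ h); rewrite ltxx.
set S := \sum_i cp i.
have scn : \sum_i cn i = S.
  have e : \sum_i c i = \sum_i (cp i - cn i) by apply: eq_bigr => i _; exact: cpn.
  by move: sc; rewrite e sumrB => /eqP; rewrite subr_eq0 eq_sym => /eqP.
have S0 : 0 < S.
  rewrite lt_def sumr_ge0 // andbT; apply/eqP => S0.
  have cp_0 i : cp i = 0 by apply: (psumr_eq0P _ S0) => // l _.
  have cn_0 i : cn i = 0 by apply: (psumr_eq0P _ (etrans scn S0)) => // l _.
  by move: ck; rewrite cpn cp_0 cn_0 subrr eqxx.
have S1 : S != 0 by rewrite gt_eqF.
pose a i := cp i / S.
pose b i := cn i / S.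
have ha i : 0 <= a i by rewrite /a divr_ge0 // ltW.
have hb i : 0 <= b i by rewrite /b divr_ge0 // ltW.
have ha1 : \sum_i a i = 1 by rewrite /a -mulr_suml divff.
have hb1 : \sum_i b i = 1 by rewrite /b -mulr_suml scn divff.
have hab i : 0 < a i -> b i = 0.
  by rewrite /a /b pmulr_lgt0 ?invr_gt0 // => /cpn0 ->; rewrite mul0r.
have hba i : 0 < b i -> a i = 0.
  by rewrite /a /b pmulr_lgt0 ?invr_gt0 // => /cnp0 ->; rewrite mul0r.
have E : \sum_i a i *: X i = \sum_i b i *: X i.
  apply/rowP => m; rewrite !summxE.
  have : \sum_i (a i *: X i) ord0 m - \sum_i (b i *: X i) ord0 m
         = (\sum_i c i * X i ord0 m) / S.
    rewrite -sumrB mulr_suml; apply: eq_bigr => i _; rewrite !mxE [c i]cpn /a /b.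
    by field.
  by rewrite sx mul0r => /eqP; rewrite subr_eq0 => /eqP.
have H0 : conv_others X j 0.
  case: (ltrP 0 (c j)) => h.
  - apply: (fin Hs Hd hb ha hb1 ha1 hba (esym E)).
    by rewrite /b cpn0 ?mul0r // /cp h.
  - apply: (fin Hs Hd ha hb ha1 hb1 hab E).
    by rewrite /a /cp ltNge h /= mul0r.
have := dist_le H0; rewrite subr0.
have := HX j; rewrite /on_sphere => -> hle.
rewrite /softmax_rattler => hlt.
by have := lt_le_trans hlt (le_trans hle Hdel); rewrite ltxx.
Qed.
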